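(* Let $(n_0^{(m)},n_1^{(m)})_{m\ge 1}$ be a sequence of pairs of integers with $2\le n_0^{(m)}\le n_1^{(m)}$, $n_1^{(m)}\to\infty$, and $n_0^{(m)}=(\log n_1^{(m)})^{\omega(1)}$, i.e. $\frac{\log n_0^{(m)}}{\log\log n_1^{(m)}}\to\infty$ as $m\to\infty$. Writing $n_0=n_0^{(m)}$, $n_1=n_1^{(m)}$, let $k=\frac{\log n_1}{\log n_0}$ and let $x_0$ be the unique root of the equation $x-1-x^{\frac{k-1}{k}}=0$ in the interval $[1,\infty)$. Then $$ch(K_{n_0,n_1})\ge (1-o(1))\frac{\log n_1}{\log x_0}$$ as $m\to\infty$.
   Context: All logarithms are to base 2. For a graph $G=(V,E)$, the choice number $ch(G)$ is the minimum integer $k$ such that for every assignment of a list $S(v)$ of at least $k$ colors to each vertex $v\in V$, there is a proper vertex coloring of $G$ assigning to each vertex $v$ a color from $S(v)$. $K_{n_0,n_1}$ denotes the complete bipartite graph with parts of sizes $n_0$ and $n_1$. *)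

(* Defs.v *)
From Stdlib Require Import Reals ClassicalEpsilon.
From mathcomp Require Import all_boot.

Set Implicit Arguments.
Unset Strict Implicit.
Unset Printing Implicit Defensive.

Definition list_coloring (V : finType) (adj : rel V) (S : V -> seq nat) (c : V -> nat) : Prop :=
  (forall v, c v \in S v) /\ (forall u v, adj u v -> c u <> c v).

Definition choosable (V : finType) (adj : rel V) (k : nat) : Prop :=
  forall S : V -> seq nat,
    (forall v, uniq (S v) /\ (k <= size (S v))%N) ->
    exists c : V -> nat, list_coloring adj S c.

Definition choice_number (V : finType) (adj : rel V) : nat :=
  epsilon (inhabits 0%N)
    (fun k => choosable adj k /\ forall j, choosable adj j -> (k <= j)%N).

Definition Kbip (n0 n1 : nat) : rel ('I_n0 + 'I_n1)%type :=
  fun u v => match u, v with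
             | inl _, inr _ => true
             | inr _, inl _ => true
             | _, _ => false
             end.

Definition log2 (x : R) : R := Rdiv (ln x) (ln 2).
Arguments Kbip n0 n1 : clear implicits.

(* Main.v *)
Require Import Defs.
From Stdlib Require Import Reals Lra Lia ZArith Classical ClassicalEpsilon.
From mathcomp Require Import all_boot zify.

Module P1.

Lemma choosable_mono (V : finType) (adj : rel V) k j :
  choosable adj k -> (k <= j)%N -> choosable adj j.
Proof.
move=> Hk kj S HS; apply: Hk => v; have [u le] := HS v; split=> //.
exact: leq_trans le.
Qed.

Lemma ex_min_prop (P : nat -> Prop) n : P n ->
  exists k, P k /\ forall j, P j -> (k <= j)%N.
Proof.
elim/ltn_ind: n => n IH Pn.
case: (classic (exists j, (j < n)%N /\ P j)) => [[j [jn Pj]]|H].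
  exact: IH jn Pj.
exists n; split=> // j Pj; rewrite leqNgt; apply/negP => jn.
by apply: H; exists j.
Qed.

Lemma cn_spec (V : finType) (adj : rel V) :
  (exists k, choosable adj k) ->
  choosable adj (choice_number adj) /\
  forall j, choosable adj j -> (choice_number adj <= j)%N.
Proof.
move=> [k Hk]; rewrite /choice_number.
apply: (epsilon_spec (inhabits 0%N) (fun k => choosable adj k /\ forall j, choosable adj j -> (k <= j)%N)).
exact: ex_min_prop Hk.
Qed.

Lemma cn_lower (V : finType) (adj : rel V) s :
  (exists k, choosable adj k) -> ~ choosable adj s -> (s < choice_number adj)%N.
Proof.
move=> Hex Hs; have [Hc _] := @cn_spec V adj Hex.
rewrite ltnNge; apply/negP => le; apply: Hs; exact: choosable_mono Hc le.
Qed.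

Lemma uniq_notin (s t : seq nat) : uniq s -> (size t < size s)%N ->
  exists x, x \in s /\ x \notin t.
Proof.
move=> us lt; case: (classic (exists x, x \in s /\ x \notin t)) => // H.
have sub : {subset s <= t}.
  move=> x xs; case: (boolP (x \in t)) => // xt; exfalso; apply: H; by exists x.
have := uniq_leq_size us sub; by rewrite leqNgt lt.
Qed.

Lemma choosable_Kbip n0 n1 : choosable (Kbip n0 n1) n0.+1.
Proof.
move=> S HS.
pose t := [seq head 0%N (S (inl a)) | a <- enum 'I_n0].
have ex : forall b, exists x, x \in S (inr b) /\ x \notin t.
  move=> b; have [u le] := HS (inr b); apply: uniq_notin => //.
  by rewrite size_map size_enum_ord.
pose cb b := epsilon (inhabits 0%N) (fun x => x \in S (inr b) /\ x \notin t).
have cbP : forall b, cb b \in S (inr b) /\ cb b \notin t.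
  move=> b; exact: (epsilon_spec (inhabits 0%N) _ (ex b)).
exists (fun v => match v with inl a => head 0%N (S (inl a)) | inr b => cb b end).
split.
  case=> [a|b]; last by case: (cbP b).
  have [_ le] := HS (inl a); case: (S (inl a)) le => //= x l _; exact: mem_head.
case=> [a|b] [a'|b'] //= _.
  move=> E; have [_ nt] := cbP b'; move: nt; rewrite -E.
  by rewrite /t (map_f (fun a => head 0%N (S (inl a)))) // mem_enum.
move=> E; have [_ nt] := cbP b; move: nt; rewrite E.
by rewrite /t (map_f (fun a => head 0%N (S (inl a)))) // mem_enum.
Qed.

End P1.
Import P1.

Module P2.
Local Open Scope R_scope.
Set Implicit Arguments.
Unset Strict Implicit.

Lemma INR_muln m n : INR (m * n)%N = (INR m * INR n).
Proof. by rewrite mulnE mult_INR. Qed.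
Lemma INR_addn m n : INR (m + n)%N = (INR m + INR n).
Proof. by rewrite addnE plus_INR. Qed.
Lemma INR_subn m n : (n <= m)%N -> INR (m - n)%N = (INR m - INR n).
Proof. move/leP=> H; by rewrite subnE minus_INR. Qed.
Lemma INR_expn m n : INR (m ^ n)%N = (INR m ^ n).
Proof. elim: n => [|n IH]; first by rewrite expn0. by rewrite expnS INR_muln IH. Qed.
Lemma INR_leq m n : (m <= n)%N -> (INR m <= INR n).
Proof. by move/leP/le_INR. Qed.
Lemma INR_leq' m n : (INR m <= INR n) -> (m <= n)%N.
Proof. by move/INR_le/leP. Qed.
Lemma INR_ltn' m n : (INR m < INR n) -> (m < n)%N.
Proof. by move/INR_lt/ltP. Qed.

Lemma prod_const_nat (s c : nat) : (\prod_(i < s) c = c ^ s)%N.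
Proof. by rewrite prod_nat_const card_ord. Qed.

Lemma ratio_bound N j s : (j <= N)%N ->
  ((j - s) ^ s * 'C(N, s) <= 'C(j, s) * N ^ s)%N.
Proof.
move=> jN.
rewrite -(@leq_pmul2r s`!) ?fact_gt0 //.
rewrite -mulnA bin_ffact.
have -> : ('C(j, s) * N ^ s * s`! = j ^_ s * N ^ s)%N by rewrite mulnAC bin_ffact.
rewrite mulnC [X in (_ <= X)%N]mulnC; apply: leq_mul.
  rewrite ffact_prod -prod_const_nat; apply: leq_prod => i _; exact: leq_subr.
rewrite ffact_prod -prod_const_nat; apply: leq_prod => i _.
apply: leq_sub2l; exact: ltnW (ltn_ord i).
Qed.

Lemma exp_pow_n x n : exp x ^ n = exp (INR n * x).
Proof.
elim: n => [|n IH]; first by rewrite /= Rmult_0_l exp_0.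
rewrite S_INR /= IH -exp_plus; f_equal; lra.
Qed.

Lemma pow_lt_mono x y n : (0 <= x) -> (x < y) -> (0 < n)%N -> (x ^ n < y ^ n).
Proof.
move=> x0 xy; elim: n => // n IH _ /=.
case: n IH => [|n] IH; first by rewrite /= !Rmult_1_r.
have h1 := IH isT; have h2 : (0 <= x ^ n.+1) by apply: pow_le.
nra.
Qed.

Lemma two_pow_lt N : (0 < N)%N -> (2 ^ N < exp (INR N)).
Proof.
move=> N0; have e1 : (2 < exp 1) by have := exp_ineq1 1 ltac:(lra); lra.
have -> : INR N = (INR N * 1) by lra.
rewrite -exp_pow_n; apply: pow_lt_mono => //; lra.
Qed.

Lemma exp_le x y : x <= y -> exp x <= exp y.
Proof. case/Rle_lt_or_eq_dec => [h|->]; [apply: Rlt_le; exact: exp_increasing | lra]. Qed.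

Lemma exp_decay (M c n N : nat) : (0 < M)%N -> (c <= M)%N -> (0 < N)%N ->
  (N * M <= n * c)%N -> ((M - c) ^ n * 2 ^ N < M ^ n)%N.
Proof.
move=> M0 cM N0 H; apply: INR_ltn'.
rewrite INR_muln !INR_expn INR_subn //.
have E2 : INR 2 = 2 by rewrite /=; lra.
rewrite E2.
have HM : (0 < INR M) by apply: lt_0_INR; apply/ltP.
have H' := INR_leq H; rewrite !INR_muln in H'.
have c0 : (0 <= INR c) by apply: pos_INR.
have cM' := INR_leq cM.
set u := (INR c / INR M).
have uM : u * INR M = INR c by rewrite /u; field; lra.
have -> : (INR M - INR c = INR M * (1 - u)) by rewrite /u; field; lra.
rewrite Rpow_mult_distr.
have u1 : (1 - u <= exp (- u)) by have := exp_ineq1_le (- u); lra.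
have u0 : (0 <= 1 - u) by nra.
have p1 : ((1 - u) ^ n <= exp (- u) ^ n) by apply: pow_incr; lra.
rewrite exp_pow_n in p1.
have nuM : INR n * u * INR M = INR n * INR c by rewrite -uM; ring.
have nu : (INR N <= INR n * u) by nra.
have p2 : (exp (INR n * - u) <= exp (- INR N)) by apply: exp_le; lra.
have p3 := two_pow_lt N0.
have p4 : exp (- INR N) * exp (INR N) = 1 by rewrite -exp_plus Rplus_opp_l exp_0.
have p5 : 0 < exp (- INR N) := exp_pos _.
have p6 : 0 <= (1 - u) ^ n by apply: pow_le.
have p7 : 0 < 2 ^ N by apply: pow_lt; lra.
have p8a : (1 - u) ^ n * 2 ^ N <= exp (- INR N) * 2 ^ N by apply: Rmult_le_compat_r; lra.
have p8b : exp (- INR N) * 2 ^ N < exp (- INR N) * exp (INR N) by apply: Rmult_lt_compat_l.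
have p8 : (1 - u) ^ n * 2 ^ N < 1 by lra.
have p9 : 0 < INR M ^ n by apply: pow_lt.
have := Rmult_lt_compat_l _ _ _ p9 p8; lra.
Qed.

End P2.
Import P2.

Module P3.
Set Implicit Arguments.
Unset Strict Implicit.

Lemma card_setT_set (T : finType) : #|{set T}| = (2 ^ #|T|)%N.
Proof. by rewrite -cardsT -card_powerset powersetT cardsT. Qed.

Lemma card_bigcup_le (T I : finType) (F : I -> {set T}) :
  (#|\bigcup_(i : I) F i| <= \sum_(i : I) #|F i|)%N.
Proof.
rewrite -big_enum /= -[X in (_ <= X)%N]big_enum /=.
elim: (enum I) => [|i r IH]; first by rewrite !big_nil cards0.
rewrite !big_cons; apply: leq_trans (leq_card_setU _ _) _.
by rewrite leq_add2l.
Qed.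


Section Comb.
Variables (n0 n1 N s : nat).
Let T := 'I_N.
Let D : {set {set T}} := [set B : {set T} | #|B| == s].
Let DA (C : {set T}) : {set {set T}} := [set B in D | B :&: C != set0].
Let DB (C : {set T}) : {set {set T}} := [set B in D | ~~ (B \subset C)].

Lemma cardD : #|D| = 'C(N, s).
Proof. by rewrite /D card_draws card_ord. Qed.

Lemma card_sub_draws (X : {set T}) :
  #|D :&: [set B : {set T} | B \subset X]| = 'C(#|X|, s).
Proof.
rewrite -cards_draws; apply: eq_card => B; rewrite !inE andbC.
by case: (#|B| == s); rewrite ?andbT ?andbF.
Qed.

Lemma cardDA C : (#|DA C| + 'C(N - #|C|, s) = 'C(N, s))%N.
Proof.
rewrite -cardD -(cardsID [set B : {set T} | B \subset ~: C] D) addnC.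
have HC : #|~: C| = (N - #|C|)%N.
  by have := cardsC C; rewrite card_ord => h; lia.
congr (_ + _)%N.
  by rewrite card_sub_draws HC.
apply: eq_card => B; rewrite !inE andbC; congr (_ && _).
by rewrite setI_eq0 disjoints_subset.
Qed.

Lemma cardDB C : (#|DB C| + 'C(#|C|, s) = 'C(N, s))%N.
Proof.
rewrite -cardD -(cardsID [set B : {set T} | B \subset C] D) addnC.
congr (_ + _)%N; first by rewrite card_sub_draws.
by apply: eq_card => B; rewrite !inE andbC.
Qed.


Lemma leq_expn_base a b n : (a <= b)%N -> (a ^ n <= b ^ n)%N.
Proof. move=> ab; elim: n => [|n IH]; first by rewrite !expn0. by rewrite !expnS leq_mul. Qed.

Hypothesis N0 : (0 < N)%N.
Hypothesis sN : (s <= N)%N.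
Hypothesis Hj : forall j, (j <= N)%N ->
  (N * 'C(N, s) <= n1 * 'C(j, s))%N \/ (N * 'C(N, s) <= n0 * 'C(N - j, s))%N.

Lemma term_lt C :
  (#|DA C| ^ n0 * #|DB C| ^ n1 * 2 ^ N < 'C(N, s) ^ n0 * 'C(N, s) ^ n1)%N.
Proof.
have M0 : (0 < 'C(N, s))%N by rewrite bin_gt0.
have jN : (#|C| <= N)%N by rewrite -[X in (_ <= X)%N](card_ord N) max_card.
have eA := cardDA C; have eB := cardDB C.
case: (Hj jN) => H.
  have eB' : #|DB C| = ('C(N, s) - 'C(#|C|, s))%N by rewrite -eB addnK.
  have cM : ('C(#|C|, s) <= 'C(N, s))%N by rewrite -eB leq_addl.
  have h := exp_decay M0 cM N0 H.
  have hA : (#|DA C| ^ n0 <= 'C(N, s) ^ n0)%N by apply: leq_expn_base; rewrite -eA leq_addr.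
  rewrite -mulnA eB'; apply: (leq_ltn_trans (leq_mul hA (leqnn _))).
  by rewrite ltn_pmul2l ?expn_gt0 ?M0.
have eA' : #|DA C| = ('C(N, s) - 'C(N - #|C|, s))%N by rewrite -eA addnK.
have cM : ('C(N - #|C|, s) <= 'C(N, s))%N by rewrite -eA leq_addl.
have h := exp_decay M0 cM N0 H.
have hB : (#|DB C| ^ n1 <= 'C(N, s) ^ n1)%N by apply: leq_expn_base; rewrite -eB leq_addr.
rewrite mulnAC eA' [X in (_ < X)%N]mulnC.
apply: (leq_ltn_trans (leq_mul (leqnn _) hB)).
by rewrite mulnC ltn_pmul2l ?expn_gt0 ?M0.
Qed.

Lemma not_choosable : ~ choosable (Kbip n0 n1) s.
Proof.
move=> Hch.
pose FA := {ffun 'I_n0 -> {set T}}; pose FB := {ffun 'I_n1 -> {set T}}.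
pose G : {set FA * FB} :=
  setX [set f : FA | f \in ffun_on (mem D)] [set f : FB | f \in ffun_on (mem D)].
pose Bad C : {set FA * FB} :=
  setX [set f : FA | f \in ffun_on (mem (DA C))] [set f : FB | f \in ffun_on (mem (DB C))].
have cG : #|G| = ('C(N, s) ^ n0 * 'C(N, s) ^ n1)%N.
  by rewrite cardsX !cardsE !card_ffun_on !card_ord cardD.
have cBad C : #|Bad C| = (#|DA C| ^ n0 * #|DB C| ^ n1)%N.
  rewrite cardsX !cardsE !card_ffun_on; congr (_ ^ _ * _ ^ _)%N; try (by apply: eq_card => B; rewrite !inE unfold_in /= !inE); by rewrite card_ord.
have lt : (#|\bigcup_(C : {set T}) Bad C| < #|G|)%N.
  apply: leq_ltn_trans (card_bigcup_le _) _.
  under eq_bigr => C _ do rewrite cBad.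
  set Y := ('C(N, s) ^ n0 * 'C(N, s) ^ n1)%N.
  have H : (\sum_(C : {set T}) (#|DA C| ^ n0 * #|DB C| ^ n1 * 2 ^ N + 1) <=
            \sum_(C : {set T}) Y)%N.
    apply: leq_sum => C _; rewrite addn1; exact: term_lt.
  rewrite big_split /= -big_distrl /= !sum_nat_const card_setT_set card_ord in H.
  rewrite cG -/Y.
  move: H; rewrite muln1 [X in (_ <= X)%N]mulnC -mulSnr leq_pmul2r ?expn_gt0 //.

have [p pG pnot] : exists2 p, p \in G & p \notin \bigcup_(C : {set T}) Bad C.
  apply/subsetPn; apply/negP => sub; have := subset_leq_card sub; by rewrite leqNgt lt.
case: p pG pnot => fa fb; rewrite !inE => /andP [/ffun_onP hA /ffun_onP hB] pnot.
pose S v := match v with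
            | inl a => map val (enum (fa a))
            | inr b => map val (enum (fb b)) end.
have [c [cS cadj]] : exists c, list_coloring (Kbip n0 n1) S c.
  apply: Hch => -[a|b] /=.
    have := hA a; rewrite !inE => /eqP Ha.
    by split; [rewrite (map_inj_uniq val_inj) enum_uniq | rewrite size_map -cardE Ha].
  have := hB b; rewrite !inE => /eqP Hb.
  by split; [rewrite (map_inj_uniq val_inj) enum_uniq | rewrite size_map -cardE Hb].
pose C : {set T} := [set x : T | [exists a : 'I_n0, c (inl a) == val x]].
move/bigcupP: pnot; apply; exists C => //.
rewrite !inE; apply/andP; split; apply/ffun_onP.
  move=> a /=; rewrite !inE; have := hA a; rewrite /= inE => -> /=; apply/set0Pn.
  have := cS (inl a); rewrite /S => /mapP [x xin ex].
  exists x; rewrite !inE -mem_enum xin /=; apply/existsP; exists a; exact/eqP.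
move=> b /=; rewrite !inE; have := hB b; rewrite /= inE => -> /=; apply/negP => sub.
have := cS (inr b); rewrite /S => /mapP [y yin ey].
have := subsetP sub y; rewrite -mem_enum yin => /(_ isT); rewrite inE.
case/existsP => a /eqP ea.
by apply: (cadj (inl a) (inr b)) => //; rewrite ea ey.
Qed.
End Comb.

End P3.
Import P3.

Module P4.
Local Open Scope R_scope.
Set Implicit Arguments.
Unset Strict Implicit.

Lemma pow_exp_ln (n N s : nat) : (0 < N)%N -> (0 < n)%N -> (0 < s)%N ->
  INR n * (exp (ln (INR N) / INR s) * exp (- ln (INR n) / INR s)) ^ s = INR N.
Proof.
move=> N0 n0 s0.
have HN : 0 < INR N by apply: lt_0_INR; apply/ltP.
have Hn : 0 < INR n by apply: lt_0_INR; apply/ltP.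
have Hs : 0 < INR s by apply: lt_0_INR; apply/ltP.
rewrite -exp_plus exp_pow_n.
have -> : INR s * (ln (INR N) / INR s + - ln (INR n) / INR s) = ln (INR N) + - ln (INR n).
  field; lra.
rewrite exp_plus exp_Ropp !exp_ln //; field; lra.
Qed.

Lemma cond_nat (n0 n1 N s : nat) : (0 < N)%N -> (0 < s)%N -> (0 < n0)%N -> (0 < n1)%N ->
  INR N * exp (ln (INR N) / INR s) * (exp (- ln (INR n1) / INR s) + exp (- ln (INR n0) / INR s))
    + 2 * INR s <= INR N ->
  forall j, (j <= N)%N ->
  (N * 'C(N, s) <= n1 * 'C(j, s))%N \/ (N * 'C(N, s) <= n0 * 'C(N - j, s))%N.
Proof.
move=> N0 s0 n00 n10 H j jN.
have HN : 0 < INR N by apply: lt_0_INR; apply/ltP.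
have M0 : (0 < N ^ s)%N by rewrite expn_gt0 N0.
suff : (N ^ s.+1 <= n1 * (j - s) ^ s)%N \/ (N ^ s.+1 <= n0 * (N - j - s) ^ s)%N.
  case=> h; [left | right]; rewrite -(@leq_pmul2r (N ^ s)) //.
    apply: leq_trans (_ : n1 * (j - s) ^ s * 'C(N, s) <= _)%N.
      by rewrite mulnAC -expnS leq_mul2r h orbT.
    by rewrite -!mulnA leq_mul2l ratio_bound ?orbT.
  apply: leq_trans (_ : n0 * (N - j - s) ^ s * 'C(N, s) <= _)%N.
    by rewrite mulnAC -expnS leq_mul2r h orbT.
  by rewrite -!mulnA leq_mul2l ratio_bound ?leq_subr ?orbT.
set a := exp (ln (INR N) / INR s).
set e1 := exp (- ln (INR n1) / INR s).
set e0 := exp (- ln (INR n0) / INR s).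
rewrite -/a -/e1 -/e0 in H.
have p1 := pow_exp_ln N0 n10 s0; rewrite -/a -/e1 in p1.
have p0 := pow_exp_ln N0 n00 s0; rewrite -/a -/e0 in p0.
have a0 : 0 < a := exp_pos _.
have e10 : 0 < e1 := exp_pos _.
have e00 : 0 < e0 := exp_pos _.
have Hj := INR_leq jN.
have Hs0 : 0 <= INR s := pos_INR s.
case: (Rlt_or_le (INR j - INR s) (INR N * (a * e1))) => hX.
  right; apply: INR_leq'.
  have js : (j + s <= N)%N.
    apply: INR_leq'; rewrite INR_addn.
    have E : INR N * a * (e1 + e0) = INR N * (a * e1) + INR N * (a * e0) by ring.
    have : 0 <= INR N * (a * e0) by apply: Rmult_le_pos; [lra | apply: Rlt_le; exact: Rmult_lt_0_compat].
    lra.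
  rewrite INR_muln !INR_expn -subnDA INR_subn // INR_addn.
  have Y0 : INR N * (a * e0) <= INR N - (INR j + INR s).
    have E : INR N * a * (e1 + e0) = INR N * (a * e1) + INR N * (a * e0) by ring.
    lra.
  have := pow_incr (INR N * (a * e0)) (INR N - (INR j + INR s)) s.
  rewrite Rpow_mult_distr => h.
  have h' : INR N ^ s * (a * e0) ^ s <= (INR N - (INR j + INR s)) ^ s.
    apply: h; split => //; apply: Rmult_le_pos; [lra | apply: Rlt_le; exact: Rmult_lt_0_compat].
  have n0R : 0 < INR n0 by apply: lt_0_INR; apply/ltP.
  have := Rmult_le_compat_l _ _ _ (Rlt_le _ _ n0R) h'.
  rewrite /= -p0; nra.
left; apply: INR_leq'.
have js : (s <= j)%N.
  apply: INR_leq'; have : 0 <= INR N * (a * e1) by apply: Rmult_le_pos; [lra | apply: Rlt_le; exact: Rmult_lt_0_compat].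
  lra.
rewrite INR_muln !INR_expn INR_subn //.
have := pow_incr (INR N * (a * e1)) (INR j - INR s) s.
rewrite Rpow_mult_distr => h.
have h' : INR N ^ s * (a * e1) ^ s <= (INR j - INR s) ^ s.
  apply: h; split => //; apply: Rmult_le_pos; [lra | apply: Rlt_le; exact: Rmult_lt_0_compat].
have n1R : 0 < INR n1 by apply: lt_0_INR; apply/ltP.
have := Rmult_le_compat_l _ _ _ (Rlt_le _ _ n1R) h'.
rewrite /= -p1; nra.
Qed.

End P4.
Import P4.

Module P5.
Local Open Scope R_scope.
Set Implicit Arguments.
Unset Strict Implicit.

Lemma ln2_lt1 : ln 2 < 1.
Proof.
have e1 : 2 < exp 1 by have := exp_ineq1 1 ltac:(lra); lra.
rewrite -(ln_exp 1); apply: ln_increasing => //; lra.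
Qed.

Lemma ln2_gt_half : / 2 < ln 2.
Proof.
have h : exp (/ 2) * exp (/ 2) <= 3.
  rewrite -exp_plus; have -> : / 2 + / 2 = 1 by field. exact: exp_le_3.
have h2 : exp (/ 2) < 2.
  have := exp_pos (/ 2); nra.
rewrite -(ln_exp (/ 2)); apply: ln_increasing => //; exact: exp_pos.
Qed.

Lemma ln_le' x y : 0 < x -> x <= y -> ln x <= ln y.
Proof.
move=> x0; case/Rle_lt_or_eq_dec => [h|->]; last lra.
apply: Rlt_le; exact: ln_increasing.
Qed.

Lemma nat_floor r : 0 <= r -> exists s : nat, INR s <= r < INR s + 1.
Proof.
move=> r0; have [h1 h2] := archimed r.
have z0 : (0 < up r)%Z by apply: lt_IZR; lra.
exists (Z.to_nat (up r - 1)).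
rewrite INR_IZR_INZ Z2Nat.id; last lia.
rewrite minus_IZR; lra.
Qed.

Lemma nat_ceil y : 0 <= y -> exists N : nat, y <= INR N <= y + 1.
Proof.
move=> y0; have [s [h1 h2]] := nat_floor y0.
exists s.+1; rewrite S_INR; lra.
Qed.

Lemma ln41 : ln 41 <= 6.
Proof.
have e1 : 2 < exp 1 by have := exp_ineq1 1 ltac:(lra); lra.
have h : 2 ^ 6 < exp 1 ^ 6 by apply: pow_lt_mono => //; lra.
rewrite exp_pow_n in h; move: h.
have -> : INR 6 * 1 = 6 by rewrite /=; lra.
have -> : 2 ^ 6 = 64 by rewrite /=; lra.
move=> h; apply: Rlt_le; rewrite -(ln_exp 6); apply: ln_increasing; lra.
Qed.

Lemma real_cond (L l t0 eps : R) (s N : nat) :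
  0 < eps <= 1 -> / 2 <= l -> l <= L -> 1 <= L ->
  exp (- t0) + exp (- (l / L * t0)) = 1 -> ln 2 <= t0 ->
  (0 < s)%N -> INR s <= (1 - eps) * L / t0 ->
  40 * L ^ 2 / eps <= INR N -> ln (INR N) <= eps * l / 2 ->
  INR N * exp (ln (INR N) / INR s) * (exp (- L / INR s) + exp (- l / INR s))
    + 2 * INR s <= INR N.
Proof.
move=> [e0 e1] hl lL L1 ht0 t0l s0 hs hN hlnN.
have l2 := ln2_gt_half.
have t0p : 0 < t0 by lra.
have Sp : 0 < INR s by apply: lt_0_INR; apply/ltP.
set S := INR s in Sp hs *.
set t := L / S.
have tS : t * S = L by rewrite /t; field; lra.
have St0 : S * t0 <= (1 - eps) * L.
  have E : (1 - eps) * L / t0 * t0 = (1 - eps) * L by field; lra.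
  rewrite -E; apply: Rmult_le_compat_r; lra.
have h1 : t0 <= (1 - eps) * t.
  apply: (Rmult_le_reg_r S) => //; nra.
have tp : 0 < t by nra.
set q := l / L.
have q0 : 0 < q by rewrite /q; apply: Rdiv_lt_0_compat; lra.
have q1 : q <= 1.
  have E : q * L = l by rewrite /q; field; lra.
  nra.
have qt : q * t = l / S by rewrite /q /t; field; lra.
have E1 : - L / S = - t by rewrite /t; field; lra.
have E0 : - l / S = - (q * t) by rewrite qt; field; lra.
rewrite E1 E0.
have key : exp (- t) + exp (- (q * t)) <= exp (- (q * (eps * t))).
  have a1 : exp (- t) <= exp (- t0) * exp (- (q * (t - t0))).
    rewrite -exp_plus; apply: exp_le.
    have tt0 : t0 <= t by nra.
    have : q * (t - t0) <= t - t0.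
      have : 0 <= (1 - q) * (t - t0) by apply: Rmult_le_pos; lra.
      lra.
    lra.
  have a2 : exp (- (q * t)) = exp (- (q * t0)) * exp (- (q * (t - t0))).
    by rewrite -exp_plus; f_equal; ring.
  have a3 : exp (- (q * (t - t0))) <= exp (- (q * (eps * t))).
    apply: exp_le; nra.
  have : exp (- t0) + exp (- (q * t0)) = 1 by rewrite -ht0.
  have := exp_pos (- (q * (t - t0))).
  nra.
have qet : q * (eps * t) = eps * l / S.
  transitivity (eps * (q * t)); first ring.
  rewrite qt; field; lra.
rewrite qet in key.
have Np : 0 < INR N.
  have : 0 < 40 * L ^ 2 / eps by apply: Rdiv_lt_0_compat => //; nra.
  lra.
set D := eps * l / (2 * S).
have Dp : 0 < D by rewrite /D; apply: Rdiv_lt_0_compat; nra.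
have DS : 2 * S * D = eps * l by rewrite /D; field; lra.
have b1 : ln (INR N) / S - eps * l / S <= - D.
  have E : ln (INR N) / S - eps * l / S + D = (ln (INR N) - eps * l / 2) * / S.
    rewrite /D; field; lra.
  have : (ln (INR N) - eps * l / 2) * / S <= 0.
    have := Rinv_0_lt_compat _ Sp; nra.
  lra.
have b2 : exp (ln (INR N) / S) * exp (- (eps * l / S)) <= exp (- D).
  rewrite -exp_plus; apply: exp_le; lra.
have b3 : exp (- D) * (1 + D) <= 1.
  have := exp_ineq1_le D; have := exp_pos (- D).
  have : exp (- D) * exp D = 1 by rewrite -exp_plus Rplus_opp_l exp_0.
  nra.
have SL : S <= 2 * L by nra.
have Ne : 40 * L ^ 2 <= INR N * eps.
  have E : 40 * L ^ 2 / eps * eps = 40 * L ^ 2 by field; lra.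
  rewrite -E; apply: Rmult_le_compat_r; lra.
have c1 : 4 * S ^ 2 + 2 * S * eps * l <= INR N * eps * l.
  have : 2 * S * eps * l <= 4 * L ^ 2.
    have : eps * l <= L by nra.
    have : 0 <= 2 * S by lra.
    nra.
  have : 20 * L ^ 2 <= INR N * eps * l by nra.
  nra.
have c2 : 2 * S * (1 + D) <= INR N * D.
  have E1' : 2 * S * (1 + D) = 2 * S + eps * l by lra.
  have E2' : INR N * D * (2 * S) = INR N * eps * l by rewrite /D; field; lra.
  rewrite E1'; apply: (Rmult_le_reg_r (2 * S)); first lra.
  rewrite E2'; nra.
have u0 := exp_pos (- D).
have b4 : INR N * exp (ln (INR N) / S) * (exp (- t) + exp (- (q * t))) <= INR N * exp (- D).
  have := exp_pos (ln (INR N) / S).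
  have := Rmult_le_compat_l _ _ _ (Rlt_le _ _ (exp_pos (ln (INR N) / S))) key.
  nra.
have b5 : INR N * exp (- D) + 2 * S <= INR N.
  apply: (Rmult_le_reg_r (1 + D)); first lra.
  nra.
lra.
Qed.

End P5.
Import P5.

Module P6.
Local Open Scope R_scope.

Lemma div_nonneg a b : 0 <= a -> 0 <= b -> 0 <= a / b.
Proof.
move=> a0; case/Rle_lt_or_eq_dec => [b0|<-].
  by apply: Rmult_le_pos => //; apply: Rlt_le; apply: Rinv_0_lt_compat.
by rewrite /Rdiv Rinv_0 Rmult_0_r; lra.
Qed.

Lemma not_choosable0 n0 n1 : (0 < n0)%N -> ~ choosable (Kbip n0 n1) 0.
Proof.
move=> n0p H; have [c [cS _]] := H (fun _ => [::]) (fun _ => conj isT isT).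
by have := cS (inl (Ordinal n0p)).
Qed.


End P6.
Import P6.

Local Open Scope R_scope.

Theorem theorem3 (n0 n1 : nat -> nat) :
  (forall m, (2 <= n0 m)%N /\ (n0 m <= n1 m)%N) ->
  (forall B : R, exists M : nat, forall m, (M <= m)%N -> B <= INR (n1 m)) ->
  (forall B : R, exists M : nat, forall m, (M <= m)%N ->
       B <= log2 (INR (n0 m)) / log2 (log2 (INR (n1 m)))) ->
  forall eps : R, 0 < eps ->
  exists M : nat, forall m, (M <= m)%N ->
    let k := log2 (INR (n1 m)) / log2 (INR (n0 m)) in
    forall x0 : R, 1 <= x0 -> x0 - 1 - Rpower x0 ((k - 1) / k) = 0 ->
      (1 - eps) * (log2 (INR (n1 m)) / log2 x0)
        <= INR (choice_number (Kbip (n0 m) (n1 m))).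
Proof.
move=> H1 H2 H3 eps eps0.
have l2 := ln2_gt_half; have l21 := ln2_lt1.
case: (Rle_lt_dec 1 eps) => heps.
  exists 0%N => m _ k x0 hx0 _.
  have [h2 h3] := H1 m.
  have hb : 1 <= INR (n1 m).
    have := INR_leq (leq_trans h2 h3); rewrite /=; lra.
  have : 0 <= log2 (INR (n1 m)) / log2 x0.
    rewrite /log2; apply: div_nonneg; apply: div_nonneg; try lra.
      rewrite -ln_1; apply: ln_le' => //; lra.
    rewrite -ln_1; apply: ln_le' => //; lra.
  have := pos_INR (choice_number (Kbip (n0 m) (n1 m))).
  nra.
set B := 2 * (8 + ln (/ eps)) / eps.
have [M1 HM1] := H2 16.
have [M2 HM2] := H3 B.
exists (maxn M1 M2) => m hm k x0 hx0 hx0eq.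
have hm1 : (M1 <= m)%N by apply: leq_trans hm; apply: leq_maxl.
have hm2 : (M2 <= m)%N by apply: leq_trans hm; apply: leq_maxr.
have hb16 := HM1 m hm1.
have hrat := HM2 m hm2.
have [ha2 hab] := H1 m.
rewrite /k in hx0eq; clear k.
move: hb16 hrat hx0eq ha2 hab.
move: (n0 m) (n1 m) => a b hb16 hrat hx0eq ha2 hab.
rewrite /log2 in hrat hx0eq *.
have Ha2 : 2 <= INR a by have := INR_leq ha2; rewrite /=; lra.
have Hab : INR a <= INR b := INR_leq hab.
set L := ln (INR b) in hrat hx0eq *.
set l := ln (INR a) in hrat hx0eq *.
have hl : ln 2 <= l by apply: ln_le'; lra.
have hlL : l <= L by apply: ln_le'; lra.
have h16 : ln 16 = 4 * ln 2.
  have -> : 16 = 2 ^ 4 by rewrite /=; lra.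
  by rewrite ln_pow; [rewrite /=; ring | lra].
have hL : 4 * ln 2 <= L by rewrite -h16; apply: ln_le'; lra.
set lam := ln (L / ln 2).
have hlam : 1 <= lam.
  have : ln 4 <= lam.
    apply: ln_le'; first lra.
    have E : 4 * ln 2 / ln 2 = 4 by field; lra.
    rewrite -E; apply: Rmult_le_compat_r; [apply: Rlt_le; apply: Rinv_0_lt_compat; lra | lra].
  have -> : ln 4 = 2 * ln 2.
    have -> : 4 = 2 ^ 2 by rewrite /=; lra.
    by rewrite ln_pow; [rewrite /=; ring | lra].
  lra.
have lp : 0 < l by lra.
have Lp : 0 < L by lra.
have hlB : B * lam <= l.
  have E : l / ln 2 / (lam / ln 2) = l / lam by field; lra.
  rewrite E in hrat.
  have E2 : l / lam * lam = l by field; lra.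
  rewrite -E2; apply: Rmult_le_compat_r; lra.
have Eexp : (L / ln 2 / (l / ln 2) - 1) / (L / ln 2 / (l / ln 2)) = 1 - l / L.
  field; repeat split; lra.
rewrite Eexp /Rpower in hx0eq.
set t0 := ln x0 in hx0eq *.
have x0e : x0 = exp t0 by rewrite /t0 exp_ln; lra.
have t00 : 0 <= t0 by rewrite /t0 -ln_1; apply: ln_le'; lra.
have qq : 0 <= 1 - l / L.
  have : l / L <= 1.
    have E : L / L = 1 by field; lra.
    rewrite -E; apply: Rmult_le_compat_r; [apply: Rlt_le; apply: Rinv_0_lt_compat| ]; lra.
  lra.
have ex1 : 1 <= exp ((1 - l / L) * t0).
  have : exp 0 <= exp ((1 - l / L) * t0) by apply: exp_le; apply: Rmult_le_pos.
  by rewrite exp_0.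
have x02 : 2 <= x0 by lra.
have t0l : ln 2 <= t0 by rewrite /t0; apply: ln_le'; lra.
have ht0 : exp (- t0) + exp (- (l / L * t0)) = 1.
  have E1 : exp ((1 - l / L) * t0) = exp t0 * exp (- (l / L * t0)).
    by rewrite -exp_plus; f_equal; ring.
  have E2 : exp (- t0) * exp t0 = 1 by rewrite -exp_plus Rplus_opp_l exp_0.
  rewrite E1 -x0e in hx0eq.
  have : exp (- t0) * (x0 - 1 - x0 * exp (- (l / L * t0))) = 0 by rewrite hx0eq; ring.
  rewrite {1 2}x0e; nra.
have Egoal : (1 - eps) * (L / ln 2 / (t0 / ln 2)) = (1 - eps) * L / t0.
  field; lra.
rewrite Egoal.
set r := (1 - eps) * L / t0.
have r0 : 0 <= r by rewrite /r; apply: div_nonneg; nra.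
have [s [hs1 hs2]] := nat_floor r0.
have Hex : exists k, choosable (Kbip a b) k by exists a.+1; exact: choosable_Kbip.
have a0 : (0 < a)%N by apply: leq_trans ha2.
case: s hs1 hs2 => [|s] hs1 hs2.
  have := cn_lower _ _ _ Hex (not_choosable0 a b a0).
  move/INR_leq; rewrite /= in hs2 *; lra.
have rt : r * t0 = (1 - eps) * L by rewrite /r; field; lra.
have sL : INR s.+1 <= 2 * L by nra.
have L1 : 1 <= L by lra.
have y0 : 0 <= 40 * L ^ 2 / eps by apply: div_nonneg; nra.
have [N [hN1 hN2]] := nat_ceil y0.
have L2e : L ^ 2 <= L ^ 2 / eps.
  have E : L ^ 2 / eps * eps = L ^ 2 by field; lra.
  have : 0 <= L ^ 2 / eps by apply: div_nonneg; nra.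
  nra.
have Np : 0 < INR N by nra.
have hlnN : ln (INR N) <= eps * l / 2.
  have hN3 : INR N <= 41 * (L ^ 2 * / eps) by rewrite /Rdiv in hN2 L2e; nra.
  have ie : 0 < / eps by apply: Rinv_0_lt_compat.
  have h1 : ln (INR N) <= ln (41 * (L ^ 2 * / eps)) by apply: ln_le'.
  rewrite ln_mult ?ln_mult ?ln_pow in h1; try lra; try nra; try apply: pow_lt; try lra.
  have h2 : ln L <= lam.
    apply: ln_le'; first lra.
    have E : L / ln 2 * ln 2 = L by field; lra.
    have : 0 <= L / ln 2 by apply: div_nonneg; lra.
    nra.
  have h3 : 0 <= ln (/ eps).
    rewrite -ln_1; apply: ln_le'; first lra.
    have E : / eps * eps = 1 by field; lra.
    nra.
  have h4 := ln41.
  have h5 : eps * l / 2 >= (8 + ln (/ eps)) * lam.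
    have E : eps * (B * lam) / 2 = (8 + ln (/ eps)) * lam by rewrite /B; field; lra.
    have : eps * (B * lam) / 2 <= eps * l / 2 by nra.
    lra.
  have : INR 2 = 2 by rewrite /=; lra.
  move=> _; rewrite ln_1 in h1.
  have : ln (/ eps) <= ln (/ eps) * lam by nra.
  lra.
have hl2 : / 2 <= l by lra.
have cond := real_cond (conj eps0 (Rlt_le _ _ heps)) hl2
  hlL L1 ht0 t0l (ltn0Sn s) hs1 hN1 hlnN.
have N0 : (0 < N)%N by apply: INR_ltn'; rewrite /=.
have sN : (s.+1 <= N)%N.
  apply: INR_leq'; have : 2 * L <= 40 * L ^ 2 by nra.
  lra.
have b0 : (0 < b)%N by apply: leq_trans hab.
have Hj := cond_nat N0 (ltn0Sn s) a0 b0 cond.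
have := cn_lower _ _ _ Hex (not_choosable N0 sN Hj).
move/INR_leq; rewrite !S_INR in hs2 *; lra.
Qed.
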